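(* Let $\alpha\in\mathbb R$, $k\in\mathbb Z$, and consider $\widehat\Delta_k=\partial_x^2-\frac{\alpha}{x}\partial_x-k^2|x|^{2\alpha}$ on $(-\infty,0)\cup(0,\infty)$ with weight $|x|^{-\alpha}$. Then the endpoints $+\infty$ and $-\infty$ are limit-point for every $k$. Regarding $0^+$ and $0^-$: (1) if $\alpha\le-3$ or $\alpha\ge1$, they are limit-point for every $k$; (2) if $-3<\alpha\le-1$, they are limit-circle for $k=0$ and limit-point for $k\ne0$; (3) if $-1<\alpha<1$, they are limit-circle for every $k$.
   Context: An endpoint $a$ of one of the intervals $(-\infty,0)$, $(0,\infty)$ (namely $-\infty,0^-,0^+,+\infty$) is limit-circle for $\widehat\Delta_k$ if every solution $u$ of $\widehat\Delta_ku=0$ on that interval belongs to $L^2(I_a,|x|^{-\alpha}dx)$ for some (equivalently any) subinterval $I_a$ of the form $(a,d)$ or $(d,a)$ with one endpoint equal to $a$; otherwise $a$ is limit-point. *)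

(* Defs.v *)
From Stdlib Require Import Reals ZArith.
Open Scope R_scope.

Definition negI (x : R) : Prop := x < 0.
Definition posI (x : R) : Prop := 0 < x.

Definition is_solution (alpha : R) (k : Z) (I : R -> Prop) (u : R -> R) : Prop :=
  exists u1 u2 : R -> R,
    forall x, I x ->
      derivable_pt_lim u x (u1 x) /\
      derivable_pt_lim u1 x (u2 x) /\
      u2 x - alpha / x * u1 x - (IZR k) ^ 2 * Rpower (Rabs x) (2 * alpha) * u x = 0.

(* Improper Riemann integrability of a nonnegative function f on the
   (open, convex) set J: f is Riemann integrable on every compact
   [s,t] inside J and these integrals are uniformly bounded. *)
Definition improper_integrable (f : R -> R) (J : R -> Prop) : Prop :=
  exists M : R, forall s t, J s -> J t -> s <= t ->
    exists pr : Riemann_integrable f s t, RiemannInt pr <= M.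

Definition L2w (alpha : R) (u : R -> R) (J : R -> Prop) : Prop :=
  improper_integrable (fun x => (u x) ^ 2 * Rpower (Rabs x) (- alpha)) J.

Inductive endpoint := MinusInf | ZeroMinus | ZeroPlus | PlusInf.

Definition ep_interval (e : endpoint) : R -> Prop :=
  match e with
  | MinusInf | ZeroMinus => negI
  | ZeroPlus | PlusInf => posI
  end.

Definition ep_subinterval (e : endpoint) (d : R) : R -> Prop :=
  match e with
  | MinusInf => fun x => x < d
  | ZeroMinus => fun x => d < x < 0
  | ZeroPlus => fun x => 0 < x < d
  | PlusInf => fun x => d < x
  end.

Definition limit_circle (alpha : R) (k : Z) (e : endpoint) : Prop :=
  forall u, is_solution alpha k (ep_interval e) u ->
    exists d, ep_interval e d /\ L2w alpha u (ep_subinterval e d).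

Definition limit_point (alpha : R) (k : Z) (e : endpoint) : Prop :=
  ~ limit_circle alpha k e.

(* Main.v *)
Require Import Defs.
From Stdlib Require Import Reals ZArith Lra Lia Psatz.
From Coquelicot Require Import Coquelicot.
Open Scope R_scope.

Lemma dpl_ext f g x l l' : (forall y, f y = g y) -> l = l' ->
  derivable_pt_lim f x l -> derivable_pt_lim g x l'.
Proof.
  intros Hfg Hl H. subst l'. apply is_derive_Reals. apply is_derive_Reals in H.
  eapply is_derive_ext; [exact Hfg | exact H].
Qed.

Lemma dpl_mult f g x lf lg : derivable_pt_lim f x lf -> derivable_pt_lim g x lg ->
  derivable_pt_lim (fun y => f y * g y) x (lf * g x + f x * lg).
Proof. intros H1 H2. exact (derivable_pt_lim_mult f g x lf lg H1 H2). Qed.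

Lemma dpl_plus f g x lf lg : derivable_pt_lim f x lf -> derivable_pt_lim g x lg ->
  derivable_pt_lim (fun y => f y + g y) x (lf + lg).
Proof. intros H1 H2. exact (derivable_pt_lim_plus f g x lf lg H1 H2). Qed.

Lemma dpl_minus f g x lf lg : derivable_pt_lim f x lf -> derivable_pt_lim g x lg ->
  derivable_pt_lim (fun y => f y - g y) x (lf - lg).
Proof. intros H1 H2. exact (derivable_pt_lim_minus f g x lf lg H1 H2). Qed.

Lemma dpl_const a x : derivable_pt_lim (fun _ => a) x 0.
Proof. exact (derivable_pt_lim_const a x). Qed.

Lemma dpl_scal a f x l : derivable_pt_lim f x l -> derivable_pt_lim (fun y => a * f y) x (a * l).
Proof. intros H. eapply dpl_ext; [| | apply (dpl_mult (fun _ => a) f x 0 l (dpl_const a x) H)];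
  intros; simpl; ring. Qed.

Lemma dpl_exp f x l : derivable_pt_lim f x l -> derivable_pt_lim (fun y => exp (f y)) x (exp (f x) * l).
Proof. intros H. eapply dpl_ext; [| | apply (derivable_pt_lim_comp f exp x l (exp (f x)) H (derivable_pt_lim_exp _))];
  intros; unfold comp; simpl; try ring; reflexivity. Qed.

Lemma dpl_rpow a x : 0 < x -> derivable_pt_lim (fun y => Rpower y a) x (a * Rpower x (a-1)).
Proof. intros H. exact (derivable_pt_lim_power x a H). Qed.

Lemma dpl_ln x : 0 < x -> derivable_pt_lim ln x (/ x).
Proof. apply derivable_pt_lim_ln. Qed.

Lemma dpl_div f g x lf lg : derivable_pt_lim f x lf -> derivable_pt_lim g x lg -> g x <> 0 ->
  derivable_pt_lim (fun y => f y / g y) x ((lf * g x - lg * f x) / (g x)²).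
Proof. intros H1 H2 H3. exact (derivable_pt_lim_div f g x lf lg H1 H2 H3). Qed.

Lemma rpow_pos x a : 0 < Rpower x a.
Proof. unfold Rpower. apply exp_pos. Qed.

Lemma rpow_m1 a x : 0 < x -> Rpower x (a-1) = Rpower x a / x.
Proof. intros H. unfold Rminus. rewrite Rpower_plus, Rpower_Ropp, Rpower_1 by lra. reflexivity. Qed.

Lemma rpow_2 a x : Rpower x (2*a) = Rpower x a * Rpower x a.
Proof. replace (2*a) with (a+a) by ring. apply Rpower_plus. Qed.

Lemma ln_lt_id z : 0 < z -> ln z <= z - 1.
Proof. intros H. pose proof (exp_ineq1_le (ln z)). rewrite exp_ln in H0 by lra. lra. Qed.

Lemma const_pos f : (forall x, 0 < x -> derivable_pt_lim f x 0) ->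
  forall x y, 0 < x -> 0 < y -> f x = f y.
Proof.
  intros Hd. assert (K: forall x y, 0 < x -> x < y -> f x = f y).
  { intros x y Hx Hxy. destruct (MVT_cor2 f (fun _ => 0) x y Hxy) as [c [Hc _]].
    intros c Hc; apply Hd; lra. lra. }
  intros x y Hx Hy. destruct (Rtotal_order x y) as [H|[H|H]].
  apply K; lra. subst; reflexivity. symmetry; apply K; lra.
Qed.

Lemma int_le f h H s t (pr : Riemann_integrable f s t) : s <= t ->
  (forall x, s <= x <= t -> derivable_pt_lim H x (h x)) ->
  (forall x, s <= x <= t -> continuity_pt h x) ->
  (forall x, s < x < t -> f x <= h x) -> RiemannInt pr <= H t - H s.
Proof.
  intros Hst HH Hc Hle. rewrite <- (RInt_Reals f s t pr).
  assert (E1 : ex_RInt f s t) by (apply ex_RInt_Reals_1; exact pr).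
  assert (E2 : ex_RInt h s t).
  { apply (@ex_RInt_continuous R_CompleteNormedModule). intros z Hz. rewrite Rmin_left, Rmax_right in Hz by lra.
    apply continuity_pt_filterlim. apply Hc. lra. }
  assert (E3 : RInt h s t = H t - H s).
  { apply is_RInt_unique. eapply is_RInt_ext; [| apply (is_RInt_derive H h)].
    - intros; reflexivity.
    - intros z Hz. rewrite Rmin_left, Rmax_right in Hz by lra. apply is_derive_Reals. apply HH; lra.
    - intros z Hz. rewrite Rmin_left, Rmax_right in Hz by lra. apply continuity_pt_filterlim. apply Hc; lra. }
  rewrite <- E3. apply RInt_le; auto.
Qed.

Lemma int_ge f h H s t (pr : Riemann_integrable f s t) : s <= t ->
  (forall x, s <= x <= t -> derivable_pt_lim H x (h x)) ->
  (forall x, s <= x <= t -> continuity_pt h x) ->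
  (forall x, s < x < t -> h x <= f x) -> H t - H s <= RiemannInt pr.
Proof.
  intros Hst HH Hc Hle. rewrite <- (RInt_Reals f s t pr).
  assert (E1 : ex_RInt f s t) by (apply ex_RInt_Reals_1; exact pr).
  assert (E2 : ex_RInt h s t).
  { apply (@ex_RInt_continuous R_CompleteNormedModule). intros z Hz. rewrite Rmin_left, Rmax_right in Hz by lra.
    apply continuity_pt_filterlim. apply Hc. lra. }
  assert (E3 : RInt h s t = H t - H s).
  { apply is_RInt_unique. eapply is_RInt_ext; [| apply (is_RInt_derive H h)].
    - intros; reflexivity.
    - intros z Hz. rewrite Rmin_left, Rmax_right in Hz by lra. apply is_derive_Reals. apply HH; lra.
    - intros z Hz. rewrite Rmin_left, Rmax_right in Hz by lra. apply continuity_pt_filterlim. apply Hc; lra. }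
  rewrite <- E3. apply RInt_le; auto.
Qed.
From Stdlib Require Import FunctionalExtensionality.
Definition Fw (a : R) (u : R -> R) := fun x => u x ^ 2 * Rpower (Rabs x) (- a).

Lemma cpt_ext f g x : (forall y, f y = g y) -> continuity_pt f x -> continuity_pt g x.
Proof. intros H. replace g with f by (apply functional_extensionality; auto). auto. Qed.

Lemma cont_rpow_abs a x : x <> 0 -> continuity_pt (fun y => Rpower (Rabs y) a) x.
Proof.
  intros Hx. apply (cpt_ext (comp (fun y => Rpower y a) Rabs)); [reflexivity|].
  apply continuity_pt_comp. apply Rcontinuity_abs.
  apply derivable_continuous_pt. exists (a * Rpower (Rabs x) (a-1)).
  apply dpl_rpow. apply Rabs_pos_lt; auto.
Qed.

Lemma cont_Fw a u x : x <> 0 -> continuity_pt u x -> continuity_pt (Fw a u) x.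
Proof.
  intros Hx Hu. unfold Fw. apply (cpt_ext (mult_fct (mult_fct u u) (fun y => Rpower (Rabs y) (-a)))).
  intros y; unfold mult_fct; simpl; ring.
  apply continuity_pt_mult; [apply continuity_pt_mult; auto|apply cont_rpow_abs; auto].
Qed.

Lemma cont_of_dpl f x l : derivable_pt_lim f x l -> continuity_pt f x.
Proof. intros H. apply derivable_continuous_pt. exists l. exact H. Qed.

Lemma sol_cont a k I u : is_solution a k I u -> forall x, I x -> continuity_pt u x.
Proof. intros [u1 [u2 H]] x Hx. destruct (H x Hx) as [H1 _]. eapply cont_of_dpl; eauto. Qed.

Lemma LC_upper a u h H B :
  (forall x, 0 < x -> continuity_pt u x) ->
  (forall x, 0 < x < 1 -> Fw a u x <= h x) ->
  (forall x, 0 < x < 1 -> derivable_pt_lim H x (h x) /\ continuity_pt h x) ->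
  (forall x y, 0 < x < 1 -> 0 < y < 1 -> H y - H x <= B) ->
  L2w a u (ep_subinterval ZeroPlus 1).
Proof.
  intros Hu Hf HH HB. exists B. intros s t Hs Ht Hst. simpl in *.
  assert (pr : Riemann_integrable (Fw a u) s t).
  { apply continuity_implies_RiemannInt; auto. intros x Hx. apply cont_Fw; [lra|apply Hu; lra]. }
  exists pr. eapply Rle_trans. apply (int_le _ h H); auto.
  intros x Hx; apply HH; lra. intros x Hx; apply HH; lra. intros x Hx; apply Hf; lra.
  apply HB; auto.
Qed.

Lemma LP0 f C : 0 < C -> (forall x, 0 < x < 1 -> C / x <= f x) ->
  forall d, 0 < d -> ~ improper_integrable f (fun x => 0 < x < d).
Proof.
  intros HC Hf d Hd [M HM].
  set (t := Rmin d 1 / 2).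
  assert (Ht : 0 < t < Rmin d 1) by (unfold t; pose proof (Rmin_glb_lt d 1 0); lra).
  pose proof (Rmin_l d 1). pose proof (Rmin_r d 1).
  set (e := exp (- ((Rabs M + 1) / C))).
  assert (He : 0 < e < 1). { unfold e. split. apply exp_pos. rewrite <- exp_0 at 2. apply exp_increasing.
    assert (0 < (Rabs M + 1)/C) by (pose proof (Rabs_pos M); apply Rdiv_lt_0_compat; lra). lra. }
  set (s := t * e).
  assert (Hs : 0 < s < t) by (unfold s; split; nra).
  destruct (HM s t) as [pr Hpr]; try lra.
  assert (G := int_ge f (fun y => C / y) (fun y => C * ln y) s t pr ltac:(lra)).
  assert (Hln : C * ln t - C * ln s = Rabs M + 1).
  { unfold s, e. rewrite ln_mult, ln_exp by (try apply exp_pos; lra). field. lra. }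
  assert (C * ln t - C * ln s <= RiemannInt pr).
  { apply G.
    - intros x Hx. apply (dpl_ext (fun y => C * ln y) _ _ (C * / x)). reflexivity. field; lra.
      apply dpl_scal, dpl_ln; lra.
    - intros x Hx. apply (cpt_ext (fun y => C * / y)). intros; reflexivity.
      apply continuity_pt_scal. apply continuity_pt_inv. apply continuity_pt_id. lra.
    - intros x Hx. apply Hf. lra. }
  pose proof (Rle_abs M). lra.
Qed.

Lemma LPinf f C : 0 < C -> (forall x, 1 <= x -> C <= f x) ->
  forall d, ~ improper_integrable f (fun x => d < x).
Proof.
  intros HC Hf d [M HM].
  set (s := Rmax d 1 + 1). set (t := s + (Rabs M + 1) / C).
  pose proof (Rmax_l d 1). pose proof (Rmax_r d 1).
  assert (0 < (Rabs M + 1)/C) by (pose proof (Rabs_pos M); apply Rdiv_lt_0_compat; lra).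
  destruct (HM s t) as [pr Hpr]; unfold t, s in *; try lra.
  assert (G := int_ge f (fun y => C) (fun y => C * y) _ _ pr ltac:(lra)).
  assert (C * (Rmax d 1 + 1 + (Rabs M + 1) / C) - C * (Rmax d 1 + 1) <= RiemannInt pr).
  { apply G.
    - intros x Hx. apply (dpl_ext (fun y => C * id y) _ _ (C * 1)). reflexivity. ring.
      apply dpl_scal, derivable_pt_lim_id.
    - intros x Hx. apply continuity_pt_const. intros a b; reflexivity.
    - intros x Hx. apply Hf. lra. }
  replace (C * (Rmax d 1 + 1 + (Rabs M + 1) / C) - C * (Rmax d 1 + 1)) with (Rabs M + 1) in H2 by (field; lra).
  pose proof (Rle_abs M). lra.
Qed.

Lemma sol_exp a k s c : (forall x, 0 < x -> derivable_pt_lim s x (Rpower x a)) ->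
  c * c = IZR k ^ 2 -> is_solution a k posI (fun x => exp (c * s x)).
Proof.
  intros Hs Hc.
  exists (fun x => c * Rpower x a * exp (c * s x)).
  exists (fun x => c * (a * Rpower x (a-1)) * exp (c * s x) + c * Rpower x a * (exp (c * s x) * (c * Rpower x a))).
  intros x Hx. unfold posI in Hx. split; [|split].
  - apply (dpl_ext (fun y => exp (c * s y)) _ _ (exp (c * s x) * (c * Rpower x a))); [reflexivity|ring|].
    apply (dpl_exp (fun y => c * s y)). apply (dpl_scal c s). apply Hs; auto.
  - apply (dpl_mult (fun y => c * Rpower y a) (fun y => exp (c * s y))).
    apply dpl_scal, dpl_rpow; auto. apply (dpl_exp (fun y => c * s y)). apply (dpl_scal c s). apply Hs; auto.
  - rewrite rpow_m1, Rabs_right, rpow_2 by lra. rewrite <- Hc. field. lra.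
Qed.

Lemma sol_one a : is_solution a 0 posI (fun _ => 1).
Proof.
  exists (fun _ => 0), (fun _ => 0). intros x Hx. split; [|split].
  apply dpl_const. apply dpl_const. simpl. ring.
Qed.

Lemma sol_pow a : is_solution a 0 posI (fun x => Rpower x (a+1)).
Proof.
  exists (fun x => (a+1) * Rpower x a), (fun x => (a+1) * (a * Rpower x (a-1))).
  intros x Hx. unfold posI in Hx. split; [|split].
  - apply (dpl_ext (fun y => Rpower y (a+1)) _ _ ((a+1) * Rpower x (a+1-1))); [reflexivity| |apply dpl_rpow; auto].
    f_equal. f_equal. ring.
  - apply dpl_scal, dpl_rpow; auto.
  - rewrite rpow_m1 by lra. simpl. field. lra.
Qed.

Lemma g_deriv a k u u1 u2 x : 0 < x ->
  derivable_pt_lim u1 x (u2 x) ->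
  u2 x - a / x * u1 x - IZR k ^ 2 * Rpower (Rabs x) (2 * a) * u x = 0 ->
  derivable_pt_lim (fun y => u1 y / Rpower y a) x (IZR k ^ 2 * Rpower x a * u x).
Proof.
  intros Hx H1 H2.
  eapply dpl_ext; [reflexivity| |apply (dpl_div u1 (fun y => Rpower y a) x (u2 x) (a * Rpower x (a-1)))];
  auto; [| apply dpl_rpow; auto | apply Rgt_not_eq, rpow_pos].
  rewrite Rabs_right, rpow_2 in H2 by lra. rewrite rpow_m1 by lra.
  assert (u2 x = a / x * u1 x + IZR k ^ 2 * (Rpower x a * Rpower x a) * u x) by lra.
  rewrite H. unfold Rsqr. pose proof (rpow_pos x a). field. lra.
Qed.

Lemma rep_k a k u s : is_solution a k posI u ->
  (forall x, 0 < x -> derivable_pt_lim s x (Rpower x a)) -> IZR k <> 0 ->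
  exists A B, forall x, 0 < x -> u x = A * exp (IZR k * s x) + B * exp (- IZR k * s x).
Proof.
  intros [u1 [u2 Hsol]] Hs Hk.
  set (K := IZR k).
  set (g := fun y => u1 y / Rpower y a).
  assert (HQ : forall c, c * c = K ^ 2 -> forall x, 0 < x ->
     exp (c * s x) * (c * u x - g x) = exp (c * s 1) * (c * u 1 - g 1)).
  { intros c Hc x0 Hx0. refine (const_pos (fun y => exp (c * s y) * (c * u y - g y)) _ x0 1 Hx0 ltac:(lra)).
    intros x Hx. destruct (Hsol x Hx) as [D1 [D2 E]].
    eapply dpl_ext; [reflexivity| |apply dpl_mult; [apply (dpl_exp (fun y => c * s y)); apply (dpl_scal c s); apply Hs; auto|
       apply dpl_minus; [apply dpl_scal; exact D1| apply (g_deriv a k u u1 u2 x Hx D2 E)]]].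
    unfold g. fold K. pose proof (rpow_pos x a). rewrite <- Hc. field. lra. }
  assert (H1 := HQ K ltac:(ring)). assert (H2 := HQ (-K) ltac:(ring)).
  set (P := exp (K * s 1) * (K * u 1 - g 1)) in *.
  set (N := exp (- K * s 1) * (- K * u 1 - g 1)) in *.
  exists (- N / (2 * K)), (P / (2 * K)). intros x Hx.
  specialize (H1 x Hx). specialize (H2 x Hx).
  assert (EE : exp (K * s x) * exp (- K * s x) = 1).
  { rewrite <- exp_plus. replace (K * s x + - K * s x) with 0 by ring. apply exp_0. }
  rewrite <- H1, <- H2.
  transitivity ((exp (K * s x) * exp (- K * s x)) * u x). rewrite EE; ring.
  field. auto.
Qed.

Lemma rep_0 a u s : is_solution a 0 posI u ->
  (forall x, 0 < x -> derivable_pt_lim s x (Rpower x a)) ->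
  exists A B, forall x, 0 < x -> u x = A + B * s x.
Proof.
  intros [u1 [u2 Hsol]] Hs.
  set (g := fun y => u1 y / Rpower y a).
  assert (Hg : forall x, 0 < x -> g x = g 1).
  { intros x0 Hx0. refine (const_pos g _ x0 1 Hx0 ltac:(lra)). intros x Hx. destruct (Hsol x Hx) as [D1 [D2 E]].
    eapply dpl_ext; [reflexivity| | apply (g_deriv a 0 u u1 u2 x Hx D2 E)]. simpl; ring. }
  assert (HR : forall x, 0 < x -> u x - s x * g x = u 1 - s 1 * g 1).
  { intros x0 Hx0. refine (const_pos (fun y => u y - s y * g y) _ x0 1 Hx0 ltac:(lra)). intros x Hx.
    destruct (Hsol x Hx) as [D1 [D2 E]].
    eapply dpl_ext; [reflexivity| |apply dpl_minus; [exact D1|apply dpl_mult; [apply Hs; auto|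
      apply (g_deriv a 0 u u1 u2 x Hx D2 E)]]].
    unfold g. pose proof (rpow_pos x a). simpl. field. lra. }
  exists (u 1 - s 1 * g 1), (g 1). intros x Hx. rewrite <- (HR x Hx), (Hg x Hx). ring.
Qed.

Lemma exp_le a b : a <= b -> exp a <= exp b.
Proof. intros H. destruct (Rle_lt_or_eq_dec a b H). left; apply exp_increasing; auto. subst; lra. Qed.

Lemma exp_sq z : exp z ^ 2 = exp (2 * z).
Proof. replace (2*z) with (z+z) by ring. rewrite exp_plus. ring. Qed.

Lemma ln_nonpos x : 0 < x <= 1 -> ln x <= 0.
Proof. intros H. rewrite <- ln_1. apply ln_le; lra. Qed.

Lemma ln_nonneg x : 1 <= x -> 0 <= ln x.
Proof. intros H. rewrite <- ln_1. apply ln_le; lra. Qed.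

Lemma Kabs k : IZR k <> 0 -> 1 <= Rabs (IZR k).
Proof. intros H. rewrite Rabs_Zabs. apply IZR_le. destruct k; simpl; try lia. exfalso; apply H; reflexivity. Qed.

Lemma Kabs_sq k : Rabs (IZR k) * Rabs (IZR k) = IZR k ^ 2.
Proof. rewrite <- Rabs_mult. rewrite Rabs_right. ring. nra. Qed.

Definition sP a := fun x => Rpower x (a+1) / (a+1).

Lemma dsP a x : a + 1 <> 0 -> 0 < x -> derivable_pt_lim (sP a) x (Rpower x a).
Proof.
  intros Ha Hx. unfold sP.
  eapply dpl_ext; [| |apply (dpl_scal (/(a+1)) (fun y => Rpower y (a+1))), dpl_rpow; auto].
  intros; simpl; field; auto. replace (a+1-1) with a by ring. field; auto.
Qed.

Lemma dln x : 0 < x -> derivable_pt_lim ln x (Rpower x (-1)).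
Proof. intros Hx. replace (-1) with (-(1)) by ring. rewrite Rpower_Ropp, Rpower_1 by lra. apply dpl_ln; auto. Qed.

Lemma Fw_eq a u x : 0 < x -> Fw a u x = u x ^ 2 * exp (- a * ln x).
Proof. intros Hx. unfold Fw. rewrite Rabs_right by lra. reflexivity. Qed.

Lemma rpow_exp x p : Rpower x p = exp (p * ln x).
Proof. reflexivity. Qed.

Lemma inv_exp x : 0 < x -> / x = exp (- ln x).
Proof. intros Hx. rewrite exp_Ropp, exp_ln; auto. Qed.

Lemma LP_zero a k u C : is_solution a k posI u -> 0 < C ->
  (forall x, 0 < x < 1 -> C / x <= Fw a u x) -> limit_point a k ZeroPlus.
Proof.
  intros Hu HC HF LC. destruct (LC u Hu) as [d [Hd HL]].
  exact (LP0 (Fw a u) C HC HF d Hd HL).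
Qed.

Lemma LP_inf a k u C : is_solution a k posI u -> 0 < C ->
  (forall x, 1 <= x -> C <= Fw a u x) -> limit_point a k PlusInf.
Proof.
  intros Hu HC HF LC. destruct (LC u Hu) as [d [Hd HL]].
  exact (LPinf (Fw a u) C HC HF d HL).
Qed.

Lemma exp_le1 z : z <= 0 -> exp z <= 1.
Proof. intros H. rewrite <- exp_0. apply exp_le; auto. Qed.
Lemma exp_ge1 z : 0 <= z -> 1 <= exp z.
Proof. intros H. rewrite <- exp_0. apply exp_le; auto. Qed.

Lemma LP0_a a k : 1 <= a -> limit_point a k ZeroPlus.
Proof.
  intros Ha. set (c := Rabs (IZR k)).
  apply (LP_zero a k (fun x => exp (c * sP a x)) 1).
  - apply sol_exp. intros; apply dsP; lra. apply Kabs_sq.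
  - lra.
  - intros x Hx. rewrite Fw_eq by lra. rewrite exp_sq. unfold sP, Rpower.
    pose proof (ln_nonpos x ltac:(lra)). set (L := ln x) in *.
    pose proof (exp_pos ((a+1)*L)). pose proof (Rabs_pos (IZR k)). fold c in H1.
    assert (0 <= 2 * (c * (exp ((a+1)*L) / (a+1)))).
    { apply Rmult_le_pos; [lra|]. apply Rmult_le_pos; [lra|]. unfold Rdiv; apply Rmult_le_pos; [lra|].
      left; apply Rinv_0_lt_compat; lra. }
    apply exp_le in H2. rewrite exp_0 in H2.
    unfold Rdiv at 1. rewrite Rmult_1_l. unfold L. rewrite inv_exp by lra. fold L.
    assert (exp (- L) <= exp (- a * L)) by (apply exp_le; nra).
    pose proof (exp_pos (-L)). nra.
Qed.

Lemma LP0_b a : a <= -3 -> limit_point a 0 ZeroPlus.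
Proof.
  intros Ha. apply (LP_zero a 0 (fun x => Rpower x (a+1)) 1).
  - apply sol_pow.
  - lra.
  - intros x Hx. rewrite Fw_eq by lra. unfold Rpower. rewrite exp_sq, <- exp_plus.
    pose proof (ln_nonpos x ltac:(lra)).
    unfold Rdiv. rewrite Rmult_1_l, inv_exp by lra. apply exp_le. nra.
Qed.

Lemma LP0_c a k : a < -1 -> IZR k <> 0 -> limit_point a k ZeroPlus.
Proof.
  intros Ha Hk. set (c := Rabs (IZR k)). assert (Hc : 1 <= c) by (apply Kabs; auto).
  set (p := (1 - a) / (-(a+1))). set (c0 := 2 * c / (1 - a)).
  assert (Hp : 0 < p) by (unfold p; apply Rdiv_lt_0_compat; lra).
  assert (Hc0 : 0 < c0) by (unfold c0; apply Rdiv_lt_0_compat; lra).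
  apply (LP_zero a k (fun x => exp (- c * sP a x)) (exp (p * ln c0))).
  - apply sol_exp. intros; apply dsP; lra. rewrite <- Kabs_sq. fold c. ring.
  - apply exp_pos.
  - intros x Hx. rewrite Fw_eq by lra. rewrite exp_sq. unfold sP, Rpower.
    set (L := ln x). set (y := exp ((a+1) * L)).
    assert (Hy : 0 < y) by apply exp_pos.
    set (z := c0 * y).
    assert (Hz : 0 < z) by (unfold z; nra).
    assert (E1 : 2 * (- c * (y / (a + 1))) = p * z) by (unfold z, c0, p; field; lra).
    rewrite E1.
    assert (E2 : ln z = ln c0 + (a+1) * L) by (unfold z, y; rewrite ln_mult by (try apply exp_pos; lra); rewrite ln_exp; lra).
    assert (H1 : exp (p * ln z) <= exp (p * z)) by (apply exp_le; pose proof (ln_lt_id z Hz); nra).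
    unfold Rdiv. rewrite inv_exp by lra. fold L.
    replace (exp (p * ln c0) * exp (- L)) with (exp (p * ln z) * exp (- a * L)).
    + pose proof (exp_pos (- a * L)). nra.
    + rewrite E2, <- !exp_plus. f_equal. unfold p. field. lra.
Qed.

Lemma LP0_d k : IZR k <> 0 -> limit_point (-1) k ZeroPlus.
Proof.
  intros Hk. set (c := Rabs (IZR k)). assert (Hc : 1 <= c) by (apply Kabs; auto).
  apply (LP_zero (-1) k (fun x => exp (- c * ln x)) 1).
  - apply sol_exp. intros; apply dln; lra. rewrite <- Kabs_sq. fold c. ring.
  - lra.
  - intros x Hx. rewrite Fw_eq by lra. rewrite exp_sq, <- exp_plus.
    pose proof (ln_nonpos x ltac:(lra)).
    unfold Rdiv. rewrite Rmult_1_l, inv_exp by lra. apply exp_le. nra.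
Qed.

Lemma LPi_neg a k : a < -1 -> limit_point a k PlusInf.
Proof.
  intros Ha. set (c := Rabs (IZR k)). pose proof (Rabs_pos (IZR k)). fold c in H.
  apply (LP_inf a k (fun x => exp (c * sP a x)) (exp (2 * c / (a+1)))).
  - apply sol_exp. intros; apply dsP; lra. apply Kabs_sq.
  - apply exp_pos.
  - intros x Hx. rewrite Fw_eq by lra. rewrite exp_sq. unfold sP, Rpower.
    pose proof (ln_nonneg x Hx). set (L := ln x) in *.
    assert (Hy : exp ((a+1)*L) <= 1) by (apply exp_le1; nra).
    assert (H2 : 2 * c / (a+1) <= 2 * (c * (exp ((a+1)*L) / (a+1)))).
    { assert (Hq : 2 * c / (a+1) <= 0).
      { unfold Rdiv. assert (/(a+1) < 0) by (apply Rinv_lt_0_compat; lra). nra. }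
      replace (2 * (c * (exp ((a+1)*L) / (a+1)))) with (2 * c / (a+1) * exp ((a+1)*L)) by (field; lra).
      pose proof (exp_pos ((a+1)*L)). nra. }
    apply exp_le in H2.
    assert (1 <= exp (- a * L)) by (apply exp_ge1; nra).
    pose proof (exp_pos (2 * c / (a+1))). nra.
Qed.

Lemma LPi_m1 k : limit_point (-1) k PlusInf.
Proof.
  set (c := Rabs (IZR k)). pose proof (Rabs_pos (IZR k)). fold c in H.
  apply (LP_inf (-1) k (fun x => exp (c * ln x)) 1).
  - apply sol_exp. intros; apply dln; lra. apply Kabs_sq.
  - lra.
  - intros x Hx. rewrite Fw_eq by lra. rewrite exp_sq, <- exp_plus.
    pose proof (ln_nonneg x Hx). apply exp_ge1. nra.
Qed.

Lemma LPi_k0 a : -1 < a -> limit_point a 0 PlusInf.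
Proof.
  intros Ha. apply (LP_inf a 0 (fun x => Rpower x (a+1)) 1).
  - apply sol_pow.
  - lra.
  - intros x Hx. rewrite Fw_eq by lra. unfold Rpower. rewrite exp_sq, <- exp_plus.
    pose proof (ln_nonneg x Hx). apply exp_ge1. nra.
Qed.

Lemma LPi_pos a k : -1 < a -> IZR k <> 0 -> limit_point a k PlusInf.
Proof.
  intros Ha Hk. set (c := Rabs (IZR k)). assert (Hc : 1 <= c) by (apply Kabs; auto).
  apply (LP_inf a k (fun x => exp (c * sP a x)) (2 * c / (a+1))).
  - apply sol_exp. intros; apply dsP; lra. apply Kabs_sq.
  - apply Rdiv_lt_0_compat; lra.
  - intros x Hx. rewrite Fw_eq by lra. rewrite exp_sq. unfold sP, Rpower.
    pose proof (ln_nonneg x Hx). set (L := ln x) in *.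
    set (z := 2 * (c * (exp ((a+1)*L) / (a+1)))).
    pose proof (exp_ineq1_le z).
    assert (E : z * exp (- a * L) = 2 * c / (a+1) * exp L).
    { unfold z. replace L with ((a+1)*L + -a*L) at 3 by ring. rewrite exp_plus. field. lra. }
    assert (1 <= exp L) by (apply exp_ge1; lra).
    assert (0 < 2 * c / (a+1)) by (apply Rdiv_lt_0_compat; lra).
    assert (0 <= z). { unfold z. pose proof (exp_pos ((a+1)*L)).
      apply Rmult_le_pos; [lra|]. apply Rmult_le_pos; [lra|]. left; apply Rdiv_lt_0_compat; lra. }
    pose proof (exp_pos (- a * L)). nra.
Qed.

Lemma dPow p x : p <> 0 -> 0 < x -> derivable_pt_lim (fun y => Rpower y p / p) x (Rpower x (p-1)).
Proof.
  intros Ha Hx.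
  eapply dpl_ext; [| |apply (dpl_scal (/p) (fun y => Rpower y p)), dpl_rpow; auto].
  intros; simpl; field; auto. field; auto.
Qed.

Lemma dPow' p q x : p <> 0 -> 0 < x -> q = p - 1 -> derivable_pt_lim (fun y => Rpower y p / p) x (Rpower x q).
Proof. intros H1 H2 H3. subst q. apply dPow; auto. Qed.

Lemma rpow_le1' x p : 0 < x < 1 -> 0 <= p -> Rpower x p <= 1.
Proof. intros Hx Hp. unfold Rpower. apply exp_le1. pose proof (ln_nonpos x ltac:(lra)). nra. Qed.

Lemma LC_bdd a u Kb : a < 1 -> (forall x, 0 < x -> continuity_pt u x) ->
  (forall x, 0 < x < 1 -> Rabs (u x) <= Kb) -> L2w a u (ep_subinterval ZeroPlus 1).
Proof.
  intros Ha Hu HK.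
  apply (LC_upper a u (fun y => Kb^2 * Rpower y (-a)) (fun y => Kb^2 * (Rpower y (1-a) / (1-a))) (Kb^2/(1-a))); auto.
  - intros x Hx. rewrite Fw_eq by lra. specialize (HK x Hx).
    pose proof (Rabs_pos (u x)). rewrite <- (pow2_abs (u x)).
    unfold Rpower. pose proof (exp_pos (-a * ln x)).
    assert (Rabs (u x) ^ 2 <= Kb ^ 2) by nra. nra.
  - intros x Hx. split.
    + apply dpl_scal. apply dPow'; lra.
    + apply cont_of_dpl with (Kb^2 * (-a * Rpower x (-a-1))). apply dpl_scal, dpl_rpow; lra.
  - intros x y Hx Hy; cbv beta. pose proof (rpow_le1' y (1-a) Hy ltac:(lra)). pose proof (rpow_pos x (1-a)).
    assert (0 <= Kb^2) by nra. unfold Rdiv.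
    assert (0 < /(1-a)) by (apply Rinv_0_lt_compat; lra).
    assert (Hq : 0 <= Kb^2 * /(1-a)) by (apply Rmult_le_pos; lra).
    assert (0 <= Kb^2 * /(1-a) * (1 - Rpower y (1-a) + Rpower x (1-a))) by (apply Rmult_le_pos; lra).
    nra.
Qed.

Lemma LC_mid a k : -1 < a < 1 -> limit_circle a k ZeroPlus.
Proof.
  intros Ha u Hu. exists 1. split; [unfold ep_interval, posI; lra|].
  assert (Hc := sol_cont a k posI u Hu).
  assert (HS : forall x, 0 < x < 1 -> 0 < sP a x <= 1/(a+1)).
  { intros x Hx. unfold sP. pose proof (rpow_le1' x (a+1) Hx ltac:(lra)). pose proof (rpow_pos x (a+1)).
    unfold Rdiv. assert (0 < /(a+1)) by (apply Rinv_0_lt_compat; lra). split; nra. }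
  destruct (Z.eq_dec k 0) as [Hk|Hk].
  - subst k. destruct (rep_0 a u (sP a) Hu) as [A [B HAB]]. intros; apply dsP; lra.
    apply (LC_bdd a u (Rabs A + Rabs B * (1/(a+1)))); auto; try lra.
    intros x Hx. rewrite HAB by lra. specialize (HS x Hx).
    eapply Rle_trans. apply Rabs_triang. rewrite Rabs_mult.
    rewrite (Rabs_right (sP a x)) by lra. pose proof (Rabs_pos B). nra.
  - assert (HK : IZR k <> 0) by (apply not_0_IZR; auto).
    destruct (rep_k a k u (sP a) Hu) as [A [B HAB]]; auto. intros; apply dsP; lra.
    set (E := exp (Rabs (IZR k) * (1/(a+1)))).
    apply (LC_bdd a u (Rabs A * E + Rabs B * E)); auto; try lra.
    intros x Hx. rewrite HAB by lra. specialize (HS x Hx).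
    pose proof (Rabs_pos (IZR k)).
    assert (E1 : exp (IZR k * sP a x) <= E).
    { apply exp_le. pose proof (Rle_abs (IZR k)). nra. }
    assert (E2 : exp (- IZR k * sP a x) <= E).
    { apply exp_le. pose proof (Rle_abs (- IZR k)). rewrite Rabs_Ropp in H0. nra. }
    eapply Rle_trans. apply Rabs_triang. rewrite !Rabs_mult.
    rewrite (Rabs_right (exp (IZR k * sP a x))) by (left; apply exp_pos).
    rewrite (Rabs_right (exp (- IZR k * sP a x))) by (left; apply exp_pos).
    pose proof (Rabs_pos A). pose proof (Rabs_pos B). nra.
Qed.

Lemma LC_low a : -3 < a < -1 -> limit_circle a 0 ZeroPlus.
Proof.
  intros Ha u Hu. exists 1. split; [unfold ep_interval, posI; lra|].
  assert (Hc := sol_cont a 0 posI u Hu).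
  destruct (rep_0 a u (sP a) Hu) as [A [B HAB]]. intros; apply dsP; lra.
  set (B' := B / (a+1)).
  apply (LC_upper a u (fun y => 2 * A^2 * Rpower y (-a) + 2 * B'^2 * Rpower y (a+2))
     (fun y => 2 * A^2 * (Rpower y (1-a) / (1-a)) + 2 * B'^2 * (Rpower y (a+3) / (a+3)))
     (2 * A^2 / (1-a) + 2 * B'^2 / (a+3))); auto.
  - intros x Hx. rewrite Fw_eq by lra. rewrite HAB by lra. unfold sP, Rpower.
    set (L := ln x). set (y := exp ((a+1)*L)).
    replace (A + B * (y / (a+1))) with (A + B' * y) by (unfold B'; field; lra).
    assert (Ey : y^2 * exp (-a*L) = exp ((a+2)*L)).
    { unfold y. rewrite exp_sq, <- exp_plus. f_equal. ring. }
    pose proof (exp_pos (-a*L)).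
    assert (Hs : (A + B'*y)^2 <= 2*A^2 + 2*B'^2*y^2) by (pose proof (pow2_ge_0 (A - B'*y)); nra).
    rewrite <- Ey. 
    assert (0 <= (2*A^2 + 2*B'^2*y^2 - (A + B'*y)^2) * exp (-a*L)) by (apply Rmult_le_pos; lra).
    nra.
  - intros x Hx. split.
    + apply dpl_plus; apply dpl_scal; apply dPow'; lra.
    + apply cont_of_dpl with (2*A^2 * (-a * Rpower x (-a-1)) + 2*B'^2 * ((a+2) * Rpower x (a+2-1))).
      apply dpl_plus; apply dpl_scal, dpl_rpow; lra.
  - intros x y Hx Hy; cbv beta. pose proof (rpow_le1' y (1-a) Hy ltac:(lra)). pose proof (rpow_pos x (1-a)).
    pose proof (rpow_le1' y (a+3) Hy ltac:(lra)). pose proof (rpow_pos x (a+3)).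
    assert (0 <= A^2) by nra. assert (0 <= B'^2) by nra. unfold Rdiv.
    assert (0 < /(1-a)) by (apply Rinv_0_lt_compat; lra).
    assert (0 < /(a+3)) by (apply Rinv_0_lt_compat; lra).
    assert (0 <= 2*A^2 * /(1-a) * (1 - Rpower y (1-a) + Rpower x (1-a))) by (apply Rmult_le_pos; [apply Rmult_le_pos|]; lra).
    assert (0 <= 2*B'^2 * /(a+3) * (1 - Rpower y (a+3) + Rpower x (a+3))) by (apply Rmult_le_pos; [apply Rmult_le_pos|]; lra).
    nra.
Qed.

Lemma LC_m1 : limit_circle (-1) 0 ZeroPlus.
Proof.
  intros u Hu. exists 1. split; [unfold ep_interval, posI; lra|].
  assert (Hc := sol_cont (-1) 0 posI u Hu).
  destruct (rep_0 (-1) u ln Hu) as [A [B HAB]]. intros; apply dln; lra.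
  set (c := 2 * A^2 + 8 * B^2).
  apply (LC_upper (-1) u (fun _ => c) (fun y => c * y) c); auto.
  - intros x Hx. rewrite Fw_eq by lra. rewrite HAB by lra.
    pose proof (ln_nonpos x ltac:(lra)). set (L := ln x) in *.
    assert (HxL : exp L = x) by (unfold L; apply exp_ln; lra).
    set (w := - L / 2).
    pose proof (exp_ineq1_le w).
    assert (E : exp L * exp (2 * w) = 1) by (rewrite <- exp_plus; replace (L + 2*w) with 0 by (unfold w; field); apply exp_0).
    assert (Ew : exp (2*w) = exp w ^ 2) by (rewrite exp_sq; reflexivity).
    assert (w^2 <= exp w ^ 2) by (assert (0 <= w) by (unfold w; lra); nra).
    assert (L^2 * exp L <= 4).
    { replace (L^2) with (4 * w^2) by (unfold w; field). pose proof (exp_pos L). nra. }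
    replace (- -1 * L) with L by ring. pose proof (exp_pos L).
    assert ((A + B*L)^2 <= 2*A^2 + 2*B^2*L^2) by (pose proof (pow2_ge_0 (A - B*L)); nra).
    assert (exp L <= 1) by lra. unfold c. nra.
  - intros x Hx. split.
    + apply (dpl_ext (fun y => c * id y) _ _ (c * 1)); [reflexivity|ring|]. apply dpl_scal, derivable_pt_lim_id.
    + apply continuity_pt_const. intros p q; reflexivity.
  - intros x y Hx Hy; cbv beta. assert (0 <= c) by (unfold c; nra). nra.
Qed.

Lemma dpl_refl f x l : derivable_pt_lim f (-x) l -> derivable_pt_lim (fun y => f (-y)) x (-l).
Proof.
  intros H.
  assert (H0 : derivable_pt_lim (fun y => - id y) x (-1)).
  { apply (derivable_pt_lim_opp id x 1). apply derivable_pt_lim_id. }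
  eapply dpl_ext; [| |apply (derivable_pt_lim_comp (fun y => - id y) f x (-1) l H0 H)].
  intros; reflexivity. ring.
Qed.

Lemma sol_refl a k I J u : (forall y, J y -> I (-y)) -> (forall y, J y -> y <> 0) ->
  is_solution a k I u -> is_solution a k J (fun y => u (-y)).
Proof.
  intros HJ Hz [u1 [u2 H]].
  exists (fun y => - u1 (-y)), (fun y => u2 (-y)).
  intros y Hy. destruct (H (-y) (HJ y Hy)) as [D1 [D2 E]]. split; [|split].
  - apply dpl_refl; auto.
  - replace (u2 (-y)) with (- - u2 (-y)) by ring. apply (dpl_refl (fun z => - u1 z)).
    apply derivable_pt_lim_opp in D2. exact D2.
  - rewrite Rabs_Ropp in E. specialize (Hz y Hy). rewrite <- E. field. auto.
Qed.

Lemma L2w_refl a u v J J' : (forall y, J' y -> J (-y)) -> (forall y, v y = u (-y)) ->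
  L2w a u J -> L2w a v J'.
Proof.
  intros HJ Hv [M HM]. exists M. intros s t Hs Ht Hst.
  destruct (HM (-t) (-s) (HJ t Ht) (HJ s Hs) ltac:(lra)) as [pr Hpr].
  set (f := fun x => u x ^ 2 * Rpower (Rabs x) (- a)) in *.
  set (g := fun x => v x ^ 2 * Rpower (Rabs x) (- a)).
  assert (Hi : is_RInt f (-t) (-s) (RiemannInt pr)).
  { rewrite <- (RInt_Reals f _ _ pr). apply (@RInt_correct R_CompleteNormedModule). apply ex_RInt_Reals_1; exact pr. }
  apply (@is_RInt_swap R_CompleteNormedModule) in Hi.
  apply (@is_RInt_comp_opp R_CompleteNormedModule) in Hi.
  apply (@is_RInt_opp R_CompleteNormedModule) in Hi.
  assert (Hg : is_RInt g s t (opp (opp (RiemannInt pr)))).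
  { eapply is_RInt_ext; [| exact Hi].
    intros x _. unfold g, f. rewrite opp_opp, Hv, <- (Rabs_Ropp x). reflexivity. }
  rewrite opp_opp in Hg.
  assert (Eg : ex_RInt g s t) by (exists (RiemannInt pr); exact Hg).
  exists (ex_RInt_Reals_0 _ _ _ Eg).
  rewrite <- RInt_Reals. rewrite (is_RInt_unique g s t _ Hg). exact Hpr.
Qed.

Lemma LC_sym0 a k : limit_circle a k ZeroPlus <-> limit_circle a k ZeroMinus.
Proof.
  split; intros H u Hu.
  - assert (Hv := sol_refl a k negI posI u ltac:(unfold negI, posI; intros; lra) ltac:(unfold posI; intros; lra) Hu).
    destruct (H _ Hv) as [d [Hd HL]]. simpl in Hd, HL. exists (-d). simpl. split; [unfold negI, posI in *; lra|].
    apply (L2w_refl a (fun y => u (- y)) u (fun x => 0 < x < d)); [intros y Hy; simpl in *; lra| |exact HL].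
    intros y. rewrite Ropp_involutive. reflexivity.
  - assert (Hv := sol_refl a k posI negI u ltac:(unfold negI, posI; intros; lra) ltac:(unfold negI; intros; lra) Hu).
    destruct (H _ Hv) as [d [Hd HL]]. simpl in Hd, HL. exists (-d). simpl. split; [unfold negI, posI in *; lra|].
    apply (L2w_refl a (fun y => u (- y)) u (fun x => d < x < 0)); [intros y Hy; simpl in *; lra| |exact HL].
    intros y. rewrite Ropp_involutive. reflexivity.
Qed.

Lemma LC_symInf a k : limit_circle a k PlusInf <-> limit_circle a k MinusInf.
Proof.
  split; intros H u Hu.
  - assert (Hv := sol_refl a k negI posI u ltac:(unfold negI, posI; intros; lra) ltac:(unfold posI; intros; lra) Hu).
    destruct (H _ Hv) as [d [Hd HL]]. simpl in Hd, HL. exists (-d). simpl. split; [unfold negI, posI in *; lra|].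
    apply (L2w_refl a (fun y => u (- y)) u (fun x => d < x)); [intros y Hy; simpl in *; lra| |exact HL].
    intros y. rewrite Ropp_involutive. reflexivity.
  - assert (Hv := sol_refl a k posI negI u ltac:(unfold negI, posI; intros; lra) ltac:(unfold negI; intros; lra) Hu).
    destruct (H _ Hv) as [d [Hd HL]]. simpl in Hd, HL. exists (-d). simpl. split; [unfold negI, posI in *; lra|].
    apply (L2w_refl a (fun y => u (- y)) u (fun x => x < d)); [intros y Hy; simpl in *; lra| |exact HL].
    intros y. rewrite Ropp_involutive. reflexivity.
Qed.

Lemma LP_sym0 a k : limit_point a k ZeroPlus -> limit_point a k ZeroPlus /\ limit_point a k ZeroMinus.
Proof. intros H. split; auto. intros C. apply H. apply LC_sym0; auto. Qed.

Lemma LC_sym0' a k : limit_circle a k ZeroPlus -> limit_circle a k ZeroPlus /\ limit_circle a k ZeroMinus.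
Proof. intros H. split; auto. apply LC_sym0; auto. Qed.

Lemma LPi a k : limit_point a k PlusInf.
Proof.
  destruct (Rtotal_order a (-1)) as [Ha|[Ha|Ha]].
  - apply LPi_neg; auto.
  - subst a. apply LPi_m1.
  - destruct (Z.eq_dec k 0) as [Hk|Hk]. subst; apply LPi_k0; auto.
    apply LPi_pos; auto. apply not_0_IZR; auto.
Qed.

Theorem mainTheorem7 (alpha : R) :
  (forall k : Z, limit_point alpha k PlusInf /\ limit_point alpha k MinusInf) /\
  ((alpha <= -3 \/ 1 <= alpha) ->
     forall k : Z, limit_point alpha k ZeroPlus /\ limit_point alpha k ZeroMinus) /\
  ((-3 < alpha <= -1) ->
     (limit_circle alpha 0%Z ZeroPlus /\ limit_circle alpha 0%Z ZeroMinus) /\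
     (forall k : Z, k <> 0%Z ->
        limit_point alpha k ZeroPlus /\ limit_point alpha k ZeroMinus)) /\
  ((-1 < alpha < 1) ->
     forall k : Z, limit_circle alpha k ZeroPlus /\ limit_circle alpha k ZeroMinus).
Proof.
  split; [|split; [|split]].
  - intros k. split. apply LPi. intros C. apply (LPi alpha k). apply LC_symInf; auto.
  - intros Ha k. apply LP_sym0. destruct Ha as [Ha|Ha].
    + destruct (Z.eq_dec k 0) as [Hk|Hk]. subst; apply LP0_b; auto.
      apply LP0_c; [lra|apply not_0_IZR; auto].
    + apply LP0_a; auto.
  - intros Ha. split.
    + apply LC_sym0'. destruct (Rle_lt_or_eq_dec _ _ (proj2 Ha)) as [H|H].
      apply LC_low; lra. subst; apply LC_m1.
    + intros k Hk. apply LP_sym0. destruct (Rle_lt_or_eq_dec _ _ (proj2 Ha)) as [H|H].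
      apply LP0_c; [lra|apply not_0_IZR; auto]. subst; apply LP0_d; apply not_0_IZR; auto.
  - intros Ha k. apply LC_sym0'. apply LC_mid; auto.
Qed.
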